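(* Let $V$ be a nonempty set and $T:V\to V$. Then $T$ has a Drazin inverse if and only if there exists an integer $k\ge0$ such that $S:=T|_{T^k(V)}:T^k(V)\to T^k(V)$ is a bijection. If this holds, the Drazin inverse of $T$ is $S^{-(k+1)}\circ T^k$.
   Context: $T^0$ is the identity and $T^i=T\circ T^{i-1}$. A Drazin inverse of $T:V\to V$ is a map $G:V\to V$ such that, for some integer $k\ge1$, $T^k\circ G\circ T=T^k$, and also $G\circ T\circ G=G$ and $T\circ G=G\circ T$. (It is unique when it exists.) *)

(* Defs.v *)
Fixpoint fpow {V : Type} (T : V -> V) (i : nat) : V -> V :=
  match i with
  | O => fun x => x
  | S j => fun x => T (fpow T j x)
  end.

Lemma fpow_S_r {V : Type} (T : V -> V) (k : nat) (x : V) :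
  fpow T (S k) x = fpow T k (T x).
Proof. induction k as [|k IH]; simpl; [reflexivity|]. simpl in IH. now rewrite IH. Qed.

Definition is_drazin {V : Type} (T G : V -> V) : Prop :=
  exists k : nat, 1 <= k /\
    (forall x, fpow T k (G (T x)) = fpow T k x) /\
    (forall x, G (T (G x)) = G x) /\
    (forall x, T (G x) = G (T x)).

Definition imk {V : Type} (T : V -> V) (k : nat) : Type :=
  { y : V | exists x : V, y = fpow T k x }.

Lemma imk_stable {V : Type} (T : V -> V) (k : nat) (y : V) :
  (exists x, y = fpow T k x) -> exists x, T y = fpow T k x.
Proof. intros [x ->]. exists (T x). now rewrite <- fpow_S_r. Qed.

Definition restr {V : Type} (T : V -> V) (k : nat) (y : imk T k) : imk T k :=
  exist _ (T (proj1_sig y)) (@imk_stable V T k (proj1_sig y) (proj2_sig y)).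

Definition toimk {V : Type} (T : V -> V) (k : nat) (x : V) : imk T k :=
  exist _ (fpow T k x) (ex_intro _ x eq_refl).

Definition bij {A : Type} (f : A -> A) : Prop :=
  (forall a b, f a = f b -> a = b) /\ (forall b, exists a, f a = b).
Arguments restr {V} T k y.
Arguments toimk {V} T k x.

(* Main.v *)
Require Import Defs.
From Stdlib Require Import ProofIrrelevance ClassicalEpsilon PeanoNat.

Section Aux.
Context {V : Type} (T : V -> V).

Lemma sig_eq k (a b : imk T k) : proj1_sig a = proj1_sig b -> a = b.
Proof. destruct a as [a pa], b as [b pb]; simpl; intro; subst; f_equal; apply proof_irrelevance. Qed.

Lemma fpow_add a b x : fpow T (a + b) x = fpow T a (fpow T b x).
Proof. induction a; simpl; congruence. Qed.

Lemma fpow_comm a b x : fpow T a (fpow T b x) = fpow T b (fpow T a x).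
Proof. rewrite <- !fpow_add, Nat.add_comm; reflexivity. Qed.

Lemma iota_pow k n (v : imk T k) : proj1_sig (fpow (restr T k) n v) = fpow T n (proj1_sig v).
Proof. induction n; simpl; [reflexivity|]. rewrite <- IHn. reflexivity. Qed.

Lemma toimk_iota k (v : imk T k) : toimk T k (proj1_sig v) = fpow (restr T k) k v.
Proof. apply sig_eq. simpl. rewrite iota_pow. reflexivity. Qed.

Lemma toimk_T k x : toimk T k (T x) = restr T k (toimk T k x).
Proof. apply sig_eq. simpl. rewrite <- fpow_S_r. reflexivity. Qed.

Lemma G_fpow (G : V -> V) (Hc : forall x, T (G x) = G (T x)) n x :
  G (fpow T n x) = fpow T n (G x).
Proof. induction n; simpl; [reflexivity|]. rewrite <- Hc, IHn. reflexivity. Qed.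

Lemma inv_pow {A} (f g : A -> A) (H : forall y, g (f y) = y) n v :
  fpow g n (fpow f n v) = v.
Proof. induction n; [reflexivity|].
  change (fpow g (S n) (f (fpow f n v)) = v). rewrite fpow_S_r, H. exact IHn. Qed.

Lemma part2 k (Sinv : imk T k -> imk T k)
  (HL : forall y, Sinv (restr T k y) = y) (HR : forall y, restr T k (Sinv y) = y) :
  is_drazin T (fun x => proj1_sig (fpow Sinv (S k) (toimk T k x))).
Proof.
  set (R := restr T k).
  assert (Gi : forall v : imk T k,
    proj1_sig (fpow Sinv (S k) (toimk T k (proj1_sig v))) = proj1_sig (Sinv v)).
  { intro v. rewrite toimk_iota. simpl. rewrite inv_pow by exact HL. reflexivity. }
  assert (TG : forall x, T (proj1_sig (fpow Sinv (S k) (toimk T k x)))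
                         = proj1_sig (fpow Sinv k (toimk T k x))).
  { intro x. change (T (proj1_sig ?v)) with (proj1_sig (restr T k v)).
    change (fpow Sinv (S k) ?w) with (Sinv (fpow Sinv k w)). rewrite HR. reflexivity. }
  assert (GT : forall x, proj1_sig (fpow Sinv (S k) (toimk T k (T x)))
                         = proj1_sig (fpow Sinv k (toimk T k x))).
  { intro x. rewrite toimk_T, fpow_S_r, HL. reflexivity. }
  exists (S k). split; [apply le_n_S, Nat.le_0_l|]. split; [|split].
  - intro x. rewrite GT. rewrite <- iota_pow. simpl.
    rewrite (inv_pow Sinv (restr T k)) by exact HR. reflexivity.
  - intro x. rewrite TG, Gi. reflexivity.
  - intro x. rewrite TG, GT. reflexivity.
Qed.

End Aux.

Theorem mainTheorem19 (V : Type) (HV : inhabited V) (T : V -> V) :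
  ((exists G : V -> V, is_drazin T G) <-> (exists k : nat, bij (restr T k))) /\
  (forall k : nat, bij (restr T k) ->
   forall Sinv : imk T k -> imk T k,
     (forall y, Sinv (restr T k y) = y) ->
     (forall y, restr T k (Sinv y) = y) ->
     is_drazin T (fun x => proj1_sig (fpow Sinv (S k) (toimk T k x))) /\
     (forall G : V -> V, is_drazin T G ->
        forall x, G x = proj1_sig (fpow Sinv (S k) (toimk T k x)))).
Proof.
  split; [split|].
  - intros [G [k [_ [Hd [Hg Hc]]]]]. exists k. split.
    + intros [a [u Hu]] [b [v Hv]] Hab.
      apply sig_eq. simpl.
      assert (Ha : forall u, fpow T k u = G (T (fpow T k u))).
      { intro w. rewrite <- (Hd w) at 1.
        rewrite <- G_fpow by exact Hc. rewrite <- fpow_S_r. reflexivity. }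
      apply (f_equal (@proj1_sig _ _)) in Hab. simpl in Hab.
      subst. rewrite (Ha u), (Ha v), Hab. reflexivity.
    + intros [b [x Hx]]. exists (toimk T k (G x)). apply sig_eq. simpl.
      subst. change (fpow T (S k) (G x) = fpow T k x).
      rewrite fpow_S_r, Hc. apply Hd.
  - intros [k [Hi Hs]].
    set (Sinv := fun y => proj1_sig (constructive_indefinite_description _ (Hs y))).
    assert (HR : forall y, restr T k (Sinv y) = y).
    { intro y. unfold Sinv. destruct constructive_indefinite_description; assumption. }
    assert (HL : forall y, Sinv (restr T k y) = y).
    { intro y. apply Hi. apply HR. }
    eexists. apply (part2 T k Sinv HL HR).
  - intros k [Hi Hs] Sinv HL HR. split; [apply part2; assumption|].
    intros G [k' [_ [Hd [Hg Hc]]]] x.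
    assert (HTG : forall z, G z = T (G (G z))).
    { intro z. rewrite Hc. symmetry. apply Hg. }
    assert (Hin : forall n z, exists y, G z = fpow T n y).
    { induction n; intro z. { exists (G z). reflexivity. }
      destruct (IHn (G z)) as [y Hy]. exists y. rewrite HTG, Hy. reflexivity. }
    destruct (Hin k x) as [y Hy].
    set (a := exist (fun y0 => exists x0, y0 = fpow T k x0) (G x) (ex_intro _ y Hy) : imk T k).
    change (G x) with (proj1_sig a).
    assert (Key : fpow T k (T (G x)) = fpow T k x).
    { assert (E : toimk T k (T (G x)) = toimk T k x).
      { rewrite <- (inv_pow (restr T k) Sinv HL k' (toimk T k (T (G x)))).
        rewrite <- (inv_pow (restr T k) Sinv HL k' (toimk T k x)).
        f_equal. apply sig_eq. rewrite !iota_pow. simpl.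
        rewrite (fpow_comm T k' k (T (G x))), (fpow_comm T k' k x).
        rewrite Hc, Hd. reflexivity. }
      apply (f_equal (@proj1_sig _ _)) in E. exact E. }
    f_equal.
    rewrite <- (inv_pow (restr T k) Sinv HL (S k) a).
    f_equal. apply sig_eq. rewrite iota_pow, fpow_S_r. exact Key.
Qed.
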